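(* Let $\mathcal{P}$ be a locally geometric poset with $A(\mathcal{P})\ne\emptyset$ and let $a\in A(\mathcal{P})$. (a) Suppose $a$ is not a separator of $\mathcal{P}$. If $\mathcal{P}''$ is inductive with $\exp(\mathcal{P}'')=\{d_1,\dots,d_{\ell-1}\}$ and $\mathcal{P}'$ is inductive with $\exp(\mathcal{P}')=\{d_1,\dots,d_{\ell-1},d_\ell\}$, then $\mathcal{P}$ is inductive with $\exp(\mathcal{P})=\{d_1,\dots,d_{\ell-1},d_\ell+1\}$. (b) Suppose $a$ is a separator of $\mathcal{P}$. If $\mathcal{P}''$ and $\mathcal{P}'$ are inductive with $\exp(\mathcal{P}'')=\exp(\mathcal{P}')=\{d_1,\dots,d_{\ell-1}\}$, then $\mathcal{P}$ is inductive with $\exp(\mathcal{P})=\{1,d_1,\dots,d_{\ell-1}\}$.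
   Context: All posets are finite, have a unique minimal element $\hat0$ and are ranked; $\operatorname{rk}(\mathcal{P})=\max\operatorname{rk}$; $\chi_{\mathcal{P}}(t)=\sum_x\mu(\hat0,x)t^{\operatorname{rk}(\mathcal{P})-\operatorname{rk}(x)}$. A poset is factorable if all roots of $\chi$ are positive integers, and $\exp$ denotes the multiset of roots (inductive posets are factorable). $A(\mathcal{P})$ is the set of atoms; $\bigvee T$ the set of minimal upper bounds of $T$. A lattice is geometric if $y$ covers $x$ iff there is an atom $a\not\le x$ with $y=x\vee a$; $\mathcal{P}$ is locally geometric if each $\mathcal{P}_{\le x}$ is a geometric lattice. For an atom $a$: $\mathcal{P}'$ is the subposet consisting of $\hat0$ and all elements of $\bigvee T$ for nonempty $T\subseteq A(\mathcal{P})\setminus\{a\}$; $\mathcal{P}''=\mathcal{P}_{\ge a}$ (minimal element $a$, rank $\operatorname{rk}-1$). The atom $a$ is a separator if $\operatorname{rk}(\mathcal{P})-\operatorname{rk}(\mathcal{P}')=1$ (this difference is always $0$ or $1$). Inductive posets: smallest class of locally geometric posets containing $\{\hat0\}$ and containing $\mathcal{P}$ whenever some atom $a$ has $\mathcal{P}',\mathcal{P}''$ inductive and $\chi_{\mathcal{P}''}\mid\chi_{\mathcal{P}'}$. *)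

(* Defs.v *)
(* A finite poset is represented as a finite subset [P] of an
   ambient finite type [T] carrying a relation [le]; all posets occurring in the
   theorem (P, P', P'', intervals P_{<= x}) are subsets of P with the induced
   order, so they live in the same ambient type. *)
From mathcomp Require Import all_boot all_order all_algebra.
Set Implicit Arguments. Unset Strict Implicit. Unset Printing Implicit Defensive.
Import GRing.Theory.
Local Open Scope ring_scope.

Section Posets.
Variables (T : finType) (le : rel T).

Definition poset_on (Q : {set T}) : Prop :=
  [/\ {in Q, forall x, le x x},
      {in Q &, forall x y, le x y -> le y x -> x = y} &
      {in Q & &, forall x y z, le x y -> le y z -> le x z}].

Definition minimalb (Q : {set T}) (z : T) : bool :=
  (z \in Q) && [forall x in Q, le x z ==> (x == z)].

Definition has_unique_min (Q : {set T}) : Prop :=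
  exists z, minimalb Q z /\ forall w, minimalb Q w -> w = z.

Definition leastb (Q : {set T}) (z : T) : bool :=
  (z \in Q) && [forall x in Q, le z x].

Definition coversb (Q : {set T}) (x y : T) : bool :=
  [&& x \in Q, y \in Q, le x y, x != y &
      [forall z in Q, ~~ [&& le x z, le z y, z != x & z != y]]].

Definition chainb (C : {set T}) : bool :=
  [forall u in C, forall v in C, le u v || le v u].

(* rk x = (max size of a chain of Q below x) - 1; for a ranked poset with
   \hat0 this is the length of any maximal chain from \hat0 to x *)
Definition rkx (Q : {set T}) (x : T) : nat :=
  (\max_(C : {set T} | [&& C \subset Q, chainb C & [forall u in C, le u x]])
      #|C|).-1.

Definition rk (Q : {set T}) : nat := \max_(x in Q) rkx Q x.

Definition ranked (Q : {set T}) : Prop :=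
  forall x y, coversb Q x y -> rkx Q y = (rkx Q x).+1.

Definition std_poset (Q : {set T}) : Prop :=
  [/\ poset_on Q, has_unique_min Q & ranked Q].

Definition atomb (Q : {set T}) (a : T) : bool :=
  [exists z, leastb Q z && coversb Q z a].

Definition atoms (Q : {set T}) : {set T} := [set a | atomb Q a].

Definition is_join (Q : {set T}) (u v w : T) : bool :=
  [&& w \in Q, le u w, le v w &
      [forall w' in Q, (le u w' && le v w') ==> le w w']].

Definition is_meet (Q : {set T}) (u v w : T) : bool :=
  [&& w \in Q, le w u, le w v &
      [forall w' in Q, (le w' u && le w' v) ==> le w' w]].

Definition is_lattice (Q : {set T}) : Prop :=
  forall u v, u \in Q -> v \in Q ->
    (exists w, is_join Q u v w) /\ (exists w, is_meet Q u v w).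

Definition geometric (Q : {set T}) : Prop :=
  is_lattice Q /\
  forall x y, x \in Q -> y \in Q ->
    (coversb Q x y <-> exists a, [/\ a \in atoms Q, ~~ le a x & is_join Q x a y]).

Definition Pleq (Q : {set T}) (x : T) : {set T} := [set y in Q | le y x].
Definition Pgeq (Q : {set T}) (x : T) : {set T} := [set y in Q | le x y].

Definition locally_geometric (Q : {set T}) : Prop :=
  std_poset Q /\ forall x, x \in Q -> geometric (Pleq Q x).

Fixpoint mu_fuel (Q : {set T}) (n : nat) (x y : T) : int :=
  match n with
  | 0 => 0
  | n'.+1 =>
      if x == y then 1
      else if le x y then
        - \sum_(z in Q | [&& le x z, le z y & z != y]) mu_fuel Q n' x z
      else 0
  end.

Definition mu (Q : {set T}) (x y : T) : int := mu_fuel Q #|T| x y.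

Definition chi (Q : {set T}) : {poly int} :=
  match [pick z | leastb Q z] with
  | Some z => \sum_(x in Q) (mu Q z x)%:P * 'X^(rk Q - rkx Q x)
  | None => 0
  end.

(* exp(Q) = s : chi_Q has exactly the positive integer roots s (with
   multiplicity), i.e. chi_Q = prod_{d in s} (t - d). *)
Definition exps (Q : {set T}) (s : seq nat) : Prop :=
  all (fun d => 0 < d)%N s /\ chi Q = \prod_(d <- s) ('X - (d%:R)%:P).

Definition is_ub (Q S : {set T}) (w : T) : bool :=
  (w \in Q) && [forall s in S, le s w].
Definition is_mub (Q S : {set T}) (w : T) : bool :=
  is_ub Q S w && [forall w' in Q, (is_ub Q S w' && le w' w) ==> (w' == w)].

Definition Pprime (Q : {set T}) (a : T) : {set T} :=
  [set z in Q | leastb Q z ||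
     [exists S : {set T}, [&& S \subset atoms Q :\ a, S != set0 & is_mub Q S z]]].

Definition Pdprime (Q : {set T}) (a : T) : {set T} := Pgeq Q a.

Definition separator (Q : {set T}) (a : T) : Prop :=
  (rk Q - rk (Pprime Q a))%N = 1%N.

Inductive inductive : {set T} -> Prop :=
| inductive_base (Q : {set T}) (z : T) :
    locally_geometric Q -> Q = [set z] -> inductive Q
| inductive_step (Q : {set T}) (a : T) :
    locally_geometric Q -> a \in atoms Q ->
    inductive (Pprime Q a) -> inductive (Pdprime Q a) ->
    (exists r : {poly int}, chi (Pprime Q a) = r * chi (Pdprime Q a)) ->
    inductive Q.

End Posets.

(* Main.v *)
Require Import Defs.
From mathcomp Require Import all_boot all_order all_algebra.
From mathcomp Require Import zify ring.
Set Implicit Arguments. Unset Strict Implicit. Unset Printing Implicit Defensive.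
Import GRing.Theory.

Section Gen.
Variables (T : finType) (le : rel T).

Lemma exists_min (Q X : {set T}) : poset_on le Q -> X \subset Q -> X != set0 ->
  exists2 m, m \in X & forall y, y \in X -> le y m -> y = m.
Proof.
move=> [rf anti tr] sXQ /set0Pn [x0 Hx0].
pose f m := #|[set y in X | le y m]|.
have [m Hm minm] := arg_minnP f Hx0.
have {}Hm : m \in X := Hm.
exists m => // y Hy Hym; apply/eqP; apply/negPn/negP => Hne.
have : f y < f m.
  rewrite /f; apply: proper_card; apply/properP; split.
  - apply/subsetP => w; rewrite !inE => /andP[Hw Hwy]; rewrite Hw /=.
    exact: (tr w y m (subsetP sXQ _ Hw) (subsetP sXQ _ Hy) (subsetP sXQ _ Hm) Hwy Hym).
  - exists m; first by rewrite !inE Hm /= rf // (subsetP sXQ).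
    rewrite !inE Hm /=; apply/negP => Hmy; move/eqP: Hne; apply.
    by apply: anti => //; apply: (subsetP sXQ).
by rewrite ltnNge minm.
Qed.

Lemma exists_maxrk (X : {set T}) (f : T -> nat) : X != set0 ->
  exists2 m, m \in X & forall y, y \in X -> f y <= f m.
Proof.
move=> /set0Pn [x0 Hx0].
have [m Hm maxm] := arg_maxnP f Hx0.
by exists m.
Qed.

Lemma poset_sub (Q R : {set T}) : poset_on le Q -> R \subset Q -> poset_on le R.
Proof.
move=> [rf anti tr] sRQ; split.
- by move=> x /(subsetP sRQ); apply: rf.
- by move=> x y /(subsetP sRQ) Hx /(subsetP sRQ) Hy; apply: anti.
- by move=> x y z /(subsetP sRQ) Hx /(subsetP sRQ) Hy /(subsetP sRQ) Hz; apply: tr.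
Qed.

Lemma rkx_ge (Q C : {set T}) x : C \subset Q -> chainb le C -> (forall u, u \in C -> le u x) ->
  (#|C|.-1 <= rkx le Q x)%N.
Proof.
move=> sCQ ch Cx; rewrite /rkx.
have H : (#|C| <= \max_(C0 : {set T} | [&& C0 \subset Q, chainb le C0 & [forall u in C0, le u x]]) #|C0|)%N.
  apply: (leq_bigmax_cond C); rewrite sCQ ch /=; apply/forallP => u; apply/implyP; exact: Cx.
lia.
Qed.

Lemma rkx_le (Q : {set T}) x n :
  (forall C : {set T}, C \subset Q -> chainb le C -> (forall u, u \in C -> le u x) -> #|C| <= n.+1)%N ->
  (rkx le Q x <= n)%N.
Proof.
move=> H; rewrite /rkx.
have : (\max_(C0 : {set T} | [&& C0 \subset Q, chainb le C0 & [forall u in C0, le u x]]) #|C0| <= n.+1)%N.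
  apply/bigmax_leqP => C /and3P[sCQ ch /forallP Cx]; apply: H => // u Hu.
  by have /implyP := Cx u; apply.
lia.
Qed.

Local Open Scope ring_scope.
Definition kint (Q : {set T}) x0 y := #|[set w in Q | le x0 w && le w y]|.

Lemma mu_fuelS Q n x y : mu_fuel le Q n.+1 x y = if x == y then 1%R else if le x y then
  (- \sum_(z in Q | [&& le x z, le z y & z != y]) mu_fuel le Q n x z)%R else 0%R.
Proof. by []. Qed.

Section Q.
Variables (Q : {set T}) (x0 : T).
Hypotheses (HQ : poset_on le Q) (Hx0 : x0 \in Q).

Lemma kint_lt z y : z \in Q -> y \in Q -> le x0 z -> le z y -> z != y -> (kint Q x0 z < kint Q x0 y)%N.
Proof.
case: HQ => rf anti tr Hz Hy H0z Hzy Hne.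
apply: proper_card; apply/properP; split.
- apply/subsetP => w; rewrite !inE => /and3P[Hw H1 H2]; rewrite Hw H1 /=.
  exact: (tr w z y Hw Hz Hy H2 Hzy).
- exists y; first by rewrite !inE Hy rf // (tr x0 z y Hx0 Hz Hy H0z Hzy).
  rewrite !inE Hy /=; apply/negP => /andP[_ Hyz]; move/eqP: Hne; apply.
  exact: anti.
Qed.

Lemma mu_stab n y : y \in Q -> (kint Q x0 y <= n)%N -> forall m, (n <= m)%N ->
  mu_fuel le Q m x0 y = mu_fuel le Q n x0 y.
Proof.
case: (HQ) => rf anti tr.
elim: n y => [|n IH] y Hy Hk m Hm.
  have Hn : ~~ le x0 y.
    apply/negP => H; move: Hk; rewrite leqn0 => /eqP /cards0_eq /setP /(_ y).
    by rewrite !inE Hy H rf.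
  have Hne : x0 != y by apply/eqP => E; move: Hn; rewrite E rf.
  by case: m Hm => [|m] _ //=; rewrite (negbTE Hne) (negbTE Hn).
case: m Hm => [|m] // Hm; rewrite !mu_fuelS.
case: eqP => // _; case: ifP => // Hle; congr (- _)%R.
apply: eq_bigr => z /andP[Hz /and3P[H1 H2 H3]]; apply: IH => //.
have := kint_lt Hz Hy H1 H2 H3; lia.
Qed.

Lemma mu_rec y : y \in Q -> mu le Q x0 y = if x0 == y then 1%R else if le x0 y then
  (- \sum_(z in Q | [&& le x0 z, le z y & z != y]) mu le Q x0 z)%R else 0%R.
Proof.
move=> Hy; have HT : #|T| = (#|T|.-1).+1 by rewrite prednK //; apply/card_gt0P; exists y.
rewrite {1}/mu {1}HT mu_fuelS.
case: eqP => // _; case: ifP => // Hle; congr (- _)%R.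
apply: eq_bigr => z /andP[Hz /and3P[H1 H2 H3]].
rewrite /mu (@mu_stab (#|T|.-1) z Hz) //; last by rewrite HT.
have := kint_lt Hz Hy H1 H2 H3; have : (kint Q x0 y <= #|T|)%N by apply: max_card.
lia.
Qed.

Lemma mu_char (f : T -> int) :
  (forall y, y \in Q -> le x0 y -> (\sum_(z in Q | le x0 z && le z y) f z)%R = (y == x0)%:R) ->
  forall y, y \in Q -> le x0 y -> f y = mu le Q x0 y.
Proof.
case: (HQ) => rf anti tr Hf y.
have [n] := ubnP (kint Q x0 y); elim: n y => // n IH y Hk Hy Hxy.
have := Hf y Hy Hxy; rewrite (bigD1 y) /=; last by rewrite Hy Hxy rf.
rewrite mu_rec //; case: eqP => [E|NE].
  rewrite -E eqxx big_pred0 ?addr0 // => z.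
  apply/negP => /andP[/andP[Hz /andP[H1 H2]] H3].
  by move/eqP: H3; apply; apply: anti; rewrite -?E.
rewrite Hxy; have -> : (x0 == y) = false by apply/eqP => E; apply: NE.
move=> /eqP; rewrite addr_eq0 => /eqP ->; congr (- _)%R.
apply: eq_big => [z|z /andP[/and3P[Hz H1 H2] H3]]; first by rewrite -!andbA.
apply: IH => //; have := kint_lt Hz Hy H1 H2 H3; lia.
Qed.

End Q.
End Gen.

Section Alt.
Variable T : finType.
Local Open Scope ring_scope.

Lemma alt_sum (D : {set T}) :
  \sum_(S : {set T} | S \subset D) (-1) ^+ #|S| = (D == set0)%:R :> int.
Proof.
have [->|/set0Pn [d Hd]] := eqVneq D set0.
  rewrite (eq_bigl (pred1 set0)) ?big_pred1_eq ?cards0 ?expr0 // => S.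
  by rewrite /= subset0.
rewrite /=; pose h (S : {set T}) := if d \in S then S :\ d else d |: S.
have hK : involutive h.
  move=> S; rewrite /h; case HS: (d \in S).
    by rewrite setD11 setD1K.
  by rewrite setU11 setU1K // HS.
have Hs : forall S, (h S \subset D) = (S \subset D).
  move=> S; rewrite /h; case: ifP => HS.
    apply/idP/idP => H; last by apply: subset_trans H; apply: subsetDl.
    by rewrite -(setD1K HS) subUset sub1set Hd H.
  by rewrite subUset sub1set Hd.
have Hc : forall S, (-1) ^+ #|h S| = - (-1) ^+ #|S| :> int.
  move=> S; rewrite /h; case: ifP => HS.
    by rewrite [in RHS](cardsD1 d S) HS add1n exprS mulN1r opprK.
  by rewrite cardsU1 HS add1n exprS mulN1r.
set s := (\sum_(S : {set T} | S \subset D) (-1) ^+ #|S|) : int.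
have : s = - s.
  rewrite {1}/s (reindex_inj (can_inj hK)) /=.
  under eq_bigl do rewrite Hs.
  by rewrite /s -sumrN; apply: eq_bigr => S _; rewrite Hc.
move=> E; rewrite -/s; lia.
Qed.
End Alt.

Section Main.
Variables (T : finType) (le : rel T) (P : {set T}) (a : T).
Hypothesis LG : locally_geometric le P.
Hypothesis aA : a \in atoms le P.

Local Notation A := (atoms le P).
Local Notation A' := (atoms le P :\ a).
Local Notation L x := (Pleq le P x).

Lemma HP : poset_on le P. Proof. by case: LG => [[]]. Qed.
Lemma rfl x : x \in P -> le x x. Proof. by case: HP => H _ _; apply: H. Qed.
Lemma antis x y : x \in P -> y \in P -> le x y -> le y x -> x = y.
Proof. by case: HP => _ H _; apply: H. Qed.
Lemma trn x y z : x \in P -> y \in P -> z \in P -> le x y -> le y z -> le x z.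
Proof. by case: HP => _ _ H; apply: H. Qed.
Lemma Hranked : ranked le P. Proof. by case: LG => [[]]. Qed.
Lemma Hgeo x : x \in P -> geometric le (L x). Proof. by case: LG => _; apply. Qed.

Lemma least_ex : exists z, leastb le P z.
Proof.
case: LG => [[_ [z [Hz Hu]] _] _]; exists z.
move: (Hz) => /andP[zP _]; rewrite /leastb zP /=; apply/forallP => x; apply/implyP => xP.
have s1 : [set y in P | le y x] \subset P by apply/subsetP => y; rewrite inE => /andP[].
have s2 : [set y in P | le y x] != set0 by apply/set0Pn; exists x; rewrite inE xP rfl.
have [m Hm minm] := exists_min HP s1 s2.
move: Hm; rewrite inE => /andP[mP mx].
have -> : z = m.
  symmetry; apply: Hu; rewrite /minimalb mP /=; apply/forallP => w; apply/implyP => wP.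
  apply/implyP => wm; apply/eqP; apply: minm => //.
  by rewrite inE wP (trn wP mP xP wm mx).
by [].
Qed.

Definition z0 := odflt a [pick z | leastb le P z].

Lemma z0_least : leastb le P z0.
Proof.
rewrite /z0; case: pickP => [z Hz|H] //=.
by case: least_ex => z Hz; move: (H z); rewrite Hz.
Qed.

Lemma z0P : z0 \in P. Proof. by case/andP: z0_least. Qed.
Lemma z0le x : x \in P -> le z0 x.
Proof. by case/andP: z0_least => _ /forallP H xP; move: (H x); rewrite xP. Qed.

Lemma least_uniq (Q : {set T}) z : Q \subset P -> z0 \in Q -> leastb le Q z -> z = z0.
Proof.
move=> sQP z0Q /andP[zQ /forallP H].
apply: antis; rewrite ?z0P ?(subsetP sQP) //; last exact: z0le (subsetP sQP _ zQ).
by move: (H z0); rewrite z0Q.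
Qed.

Lemma coversE (Q : {set T}) x y : coversb le Q x y ->
  [/\ x \in Q, y \in Q, le x y, x != y &
      forall z, z \in Q -> le x z -> le z y -> z = x \/ z = y].
Proof.
case/and5P => xQ yQ xy nxy /forallP H; split => // z zQ xz zy.
move: (H z); rewrite zQ xz zy /= => /negP H'.
case: (eqVneq z x) => [|zx]; first by left.
case: (eqVneq z y) => [|zy']; first by right.
by exfalso; apply: H'; rewrite zx zy'.
Qed.

Lemma coversI (Q : {set T}) x y : x \in Q -> y \in Q -> le x y -> x != y ->
  (forall z, z \in Q -> le x z -> le z y -> z = x \/ z = y) -> coversb le Q x y.
Proof.
move=> xQ yQ xy nxy H; rewrite /coversb xQ yQ xy nxy /=.
apply/forallP => z; apply/implyP => zQ; apply/negP => /and4P[xz zy zx zy'].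
by case: (H z zQ xz zy) => E; [move: zx | move: zy']; rewrite E eqxx.
Qed.

Lemma atomE c : (c \in A) = coversb le P z0 c.
Proof.
rewrite inE; apply/existsP/idP => [[z /andP[Hz Hc]]|Hc].
  by have -> : z0 = z by symmetry; apply: least_uniq => //; rewrite z0P.
by exists z0; rewrite z0_least.
Qed.

Lemma atom_P c : c \in A -> c \in P.
Proof. by rewrite atomE => /coversE []. Qed.
Lemma atom_nz c : c \in A -> c != z0.
Proof. by rewrite atomE => /coversE [] _ _ _; rewrite eq_sym. Qed.

Lemma aP : a \in P. Proof. exact: atom_P. Qed.

Lemma inL x y : (y \in L x) = (y \in P) && le y x.
Proof. by rewrite inE. Qed.

Lemma coversL x u v : x \in P -> le v x -> coversb le (L x) u v = coversb le P u v.
Proof.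
move=> xP vx; apply/idP/idP => /coversE [uQ vQ uv nuv H].
  move: uQ vQ; rewrite !inL => /andP[uP ux] /andP[vP _].
  apply: coversI => // z zP uz zv; apply: H => //.
  by rewrite inL zP (trn zP vP xP zv vx).
have ux := trn uQ vQ xP uv vx.
apply: coversI => //; rewrite ?inL ?uQ ?vQ ?ux //.
by move=> z; rewrite inL => /andP[zP _]; apply: H.
Qed.

Lemma leastL x z : x \in P -> leastb le (L x) z = (z == z0).
Proof.
move=> xP; apply/idP/eqP => [H|->].
  apply: least_uniq H; first by apply/subsetP => y; rewrite inL => /andP[].
  by rewrite inL z0P z0le.
rewrite /leastb inL z0P z0le //=; apply/forallP => y; apply/implyP.
by rewrite inL => /andP[yP _]; apply: z0le.
Qed.

Lemma atomsL x c : x \in P -> (c \in atoms le (L x)) = (c \in A) && le c x.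
Proof.
move=> xP; rewrite inE; apply/existsP/idP => [[z /andP[Hz Hc]]|/andP[cA cx]].
  move: Hz; rewrite leastL // => /eqP Ez; subst z.
  move: (Hc) => /coversE [_ cL _ _ _]; move: cL; rewrite inL => /andP[_ cx].
  by rewrite atomE -(coversL _ xP cx) Hc cx.
by exists z0; rewrite leastL // eqxx /= coversL // -atomE.
Qed.

Lemma join_ex x u v : x \in P -> le u x -> le v x -> u \in P -> v \in P ->
  exists w, is_join le (L x) u v w.
Proof.
move=> xP ux vx uP vP; case: (Hgeo xP) => /(_ u v) H _.
by case: H; rewrite ?inL ?uP ?vP ?ux ?vx.
Qed.

Lemma meet_ex x u v : x \in P -> le u x -> le v x -> u \in P -> v \in P ->
  exists w, is_meet le (L x) u v w.
Proof.
move=> xP ux vx uP vP; case: (Hgeo xP) => /(_ u v) H _.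
by case: H; rewrite ?inL ?uP ?vP ?ux ?vx.
Qed.

Lemma cover_ex u x : u \in P -> x \in P -> le u x -> u != x ->
  exists2 m, coversb le P u m & le m x.
Proof.
move=> uP xP ux nux.
have s1 : [set v in P | le u v && le v x && (v != u)] \subset P.
  by apply/subsetP => y; rewrite inE => /andP[].
have s2 : [set v in P | le u v && le v x && (v != u)] != set0.
  by apply/set0Pn; exists x; rewrite inE xP ux rfl //= eq_sym.
have [m Hm minm] := exists_min HP s1 s2.
move: Hm; rewrite inE => /andP[mP /andP[/andP[um mx] nmu]].
exists m => //; apply: coversI => //; first by rewrite eq_sym.
move=> z zP uz zm; case: (eqVneq z u) => [|nzu]; first by left.
right; apply: minm => //; rewrite inE zP uz nzu (trn zP mP xP zm mx).
by [].
Qed.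

Lemma atomistic x w : x \in P -> w \in P -> le w x ->
  (forall c, c \in A -> le c x -> le c w) -> w = x.
Proof.
move=> xP wP wx H; apply/eqP; apply/negPn/negP => nwx.
have [m cwm mx] := cover_ex wP xP wx nwx.
move: (cwm) => /coversE [_ mP wm _ _].
case: (Hgeo xP) => _ G.
have wL : w \in L x by rewrite inL wP wx.
have mL : m \in L x by rewrite inL mP mx.
have [c [cA ncw Hj]] : exists c, [/\ c \in atoms le (L x), ~~ le c w & is_join le (L x) w c m].
  by apply/(G w m wL mL); rewrite coversL.
move: cA; rewrite atomsL // => /andP[cA cx].
by rewrite (H c cA cx) in ncw.
Qed.

Lemma atom_below y : y \in P -> y != z0 -> exists2 c, c \in A & le c y.
Proof.
move=> yP nyz; have nzy : z0 != y by rewrite eq_sym.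
have [m cm my] := cover_ex z0P yP (z0le yP) nzy.
by exists m => //; rewrite atomE.
Qed.

Lemma atom_below_a y : y \in P -> le a y -> y != a -> exists2 c, c \in A' & le c y.
Proof.
move=> yP ay nya; have nay : a != y by rewrite eq_sym.
have [m cm my] := cover_ex aP yP ay nay.
move: (cm) => /coversE [_ mP am _ _].
case: (Hgeo yP) => _ G.
have aL : a \in L y by rewrite inL aP ay.
have mL : m \in L y by rewrite inL mP my.
have [c [cA nca Hj]] : exists c, [/\ c \in atoms le (L y), ~~ le c a & is_join le (L y) a c m].
  by apply/(G a m aL mL); rewrite coversL.
move: cA; rewrite atomsL // => /andP[cA cy].
exists c => //; rewrite in_setD1 cA andbT; apply/eqP => E.
by move: nca; rewrite E rfl // aP.
Qed.

Lemma mubE (S : {set T}) w : is_mub le P S w -> [/\ w \in P, forall s, s \in S -> le s w &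
   forall w', w' \in P -> (forall s, s \in S -> le s w') -> le w' w -> w' = w].
Proof.
move=> /andP[/andP[wP /forallP Hs] /forallP Hm]; split => //.
- by move=> s sS; move: (Hs s); rewrite sS.
- move=> w' w'P Hw' w'w; apply/eqP; move: (Hm w'); rewrite w'P /= w'w andbT.
  move/implyP; apply; rewrite /is_ub w'P; apply/forallP => s; apply/implyP; exact: Hw'.
Qed.

Lemma mubI (S : {set T}) w : w \in P -> (forall s, s \in S -> le s w) ->
   (forall w', w' \in P -> (forall s, s \in S -> le s w') -> le w' w -> w' = w) ->
   is_mub le P S w.
Proof.
move=> wP Hs Hm; rewrite /is_mub /is_ub wP /=; apply/andP; split.
  by apply/forallP => s; apply/implyP; apply: Hs.
apply/forallP => w'; apply/implyP => w'P; apply/implyP => /andP[/andP[_ /forallP H] w'w].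
apply/eqP; apply: Hm => // s sS; by move: (H s); rewrite sS.
Qed.

Lemma mub_ex x (S : {set T}) : x \in P -> (forall s, s \in S -> le s x) -> exists2 y, le y x & is_mub le P S y.
Proof.
move=> xP Sx.
pose X := [set w in P | le w x && [forall s in S, le s w]].
have s1 : X \subset P by apply/subsetP => y; rewrite inE => /andP[].
have s2 : X != set0.
  apply/set0Pn; exists x; rewrite inE xP rfl //=; apply/forallP => s; apply/implyP; exact: Sx.
have [m Hm minm] := exists_min HP s1 s2.
move: Hm; rewrite inE => /andP[mP /andP[mx /forallP Hs]].
exists m => //; apply: mubI => //.
  by move=> s sS; move: (Hs s); rewrite sS.
move=> w' w'P Hw' w'm; apply: minm => //; rewrite inE w'P (trn w'P mP xP w'm mx) /=.
by apply/forallP => s; apply/implyP; apply: Hw'.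
Qed.

Lemma mub_uniq x (S : {set T}) y1 y2 : x \in P -> S \subset P -> le y1 x -> le y2 x ->
  is_mub le P S y1 -> is_mub le P S y2 -> y1 = y2.
Proof.
move=> xP SP y1x y2x m1 m2.
have [y1P s1 min1] := mubE m1; have [y2P s2 min2] := mubE m2.
have [m /and4P[mL my1 my2 /forallP Hm]] := meet_ex xP y1x y2x y1P y2P.
move: mL; rewrite inL => /andP[mP mx].
have Sm : forall s, s \in S -> le s m.
  move=> s sS; have sP := subsetP SP s sS.
  move: (Hm s); rewrite inL sP (trn sP y1P xP (s1 s sS) y1x) s1 // s2 //.
by rewrite -(min1 m mP Sm my1) (min2 m mP Sm my2).
Qed.

Lemma PprimeE y : (y \in Pprime le P a) =
  (y \in P) && [exists S : {set T}, (S \subset A') && is_mub le P S y].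
Proof.
rewrite inE; case yP: (y \in P) => //=.
apply/orP/existsP => [[Hl|/existsP [S /and3P[sS _ mS]]]|[S /andP[sS mS]]].
- exists set0; rewrite sub0set /=.
  have -> : y = z0 by apply: least_uniq => //; rewrite z0P.
  apply: mubI; first exact: z0P.
    by move=> s; rewrite inE.
  by move=> w' w'P _ w'z; apply: antis; rewrite ?z0P // z0le.
- by exists S; rewrite sS.
have [S0|nS0] := eqVneq S set0.
  left; have [_ _ Hm] := mubE mS.
  have <- : z0 = y by apply: Hm; rewrite ?z0P ?z0le // => s; rewrite S0 inE.
  exact: z0_least.
by right; apply/existsP; exists S; rewrite sS nS0.
Qed.

Lemma Pprime_sub : Pprime le P a \subset P.
Proof. by apply/subsetP => y; rewrite PprimeE => /andP[]. Qed.

Lemma A'P s : s \in A' -> s \in P.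
Proof. by rewrite in_setD1 => /andP[_]; apply: atom_P. Qed.

Lemma mub_P' (S : {set T}) y : S \subset A' -> is_mub le P S y -> y \in Pprime le P a.
Proof.
move=> sS mS; have [yP _ _] := mubE mS.
by rewrite PprimeE yP; apply/existsP; exists S; rewrite sS.
Qed.

Lemma Ext x y b : x \in P -> y \in Pprime le P a -> le y x -> b \in A' -> le b x -> ~~ le b y ->
  exists v, [/\ v \in Pprime le P a, coversb le P y v, le v x & le b v].
Proof.
move=> xP; rewrite PprimeE => /andP[yP /existsP [S /andP[sS mS]]] yx bA bx nby.
have bP := A'P bA.
have [v Hj] := join_ex xP yx bx yP bP.
move: (Hj) => /and4P[vL yv bv /forallP Hv].
move: (vL); rewrite inL => /andP[vP vx].
have cv : coversb le P y v.
  case: (Hgeo xP) => _ G; rewrite -(coversL _ xP vx).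
  have yL : y \in L x by rewrite inL yP yx.
  apply/(G y v yL vL); exists b; split => //.
  by rewrite atomsL // bx andbT; move: bA; rewrite in_setD1 => /andP[].
exists v; split => //.
have [_ Sy Smin] := mubE mS.
apply: (@mub_P' (b |: S)).
  by rewrite subUset sub1set bA sS.
apply: mubI => // [s|w' w'P Hw' w'v].
  rewrite in_setU1 => /orP[/eqP ->//|sS'].
  exact: trn (A'P (subsetP sS _ sS')) yP vP (Sy s sS') yv.
have w'x := trn w'P vP xP w'v vx.
have [m /and4P[mL mw' my /forallP Hm]] := meet_ex xP w'x yx w'P yP.
move: mL; rewrite inL => /andP[mP mx].
have Sm : forall s, s \in S -> le s m.
  move=> s sS'; have sP := A'P (subsetP sS _ sS').
  move: (Hm s); rewrite inL sP (trn sP yP xP (Sy s sS') yx) Hw' ?in_setU1 ?sS' ?orbT //= Sy //.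
have ym : m = y := Smin m mP Sm my.
have yw' : le y w' by rewrite -ym.
apply: antis => //; move: (Hv w'); rewrite inL w'P w'x yw' Hw' ?in_setU1 ?eqxx //.
Qed.


Lemma chainU1 (C : {set T}) u : chainb le C -> u \in P -> C \subset P ->
  (forall w, w \in C -> le u w \/ le w u) -> chainb le (u |: C).
Proof.
move=> /forallP ch uP CP H; apply/forallP => x; apply/implyP; rewrite in_setU1 => Hx.
apply/forallP => y; apply/implyP; rewrite in_setU1 => Hy.
case/orP: Hx => [/eqP ->|xC]; case/orP: Hy => [/eqP ->|yC].
- by rewrite rfl.
- by case: (H y yC) => ->; rewrite ?orbT.
- by case: (H x xC) => ->; rewrite ?orbT.
- by move: (ch x); rewrite xC /= => /forallP /(_ y); rewrite yC.
Qed.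

Lemma chain1 u : chainb le [set u] = le u u.
Proof.
apply/forallP/idP => [/(_ u)|H x]; first by rewrite set11 /= => /forallP /(_ u); rewrite set11 orbb.
apply/implyP; rewrite in_set1 => /eqP ->; apply/forallP => y; apply/implyP.
by rewrite in_set1 => /eqP ->; rewrite H.
Qed.

Lemma rkx_sub (Q1 Q2 : {set T}) x : Q1 \subset Q2 -> (rkx le Q1 x <= rkx le Q2 x)%N.
Proof.
move=> s12; apply: rkx_le => C sC ch Cx.
have := rkx_ge (subset_trans sC s12) ch Cx; lia.
Qed.

Lemma rkx_mono (Q : {set T}) x y : Q \subset P -> y \in P -> x \in P -> le y x ->
  (rkx le Q y <= rkx le Q x)%N.
Proof.
move=> QP yP xP yx; apply: rkx_le => C sC ch Cy.
have := @rkx_ge _ le Q C x sC ch; rewrite /=.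
have H : forall u, u \in C -> le u x.
  by move=> u uC; apply: trn (subsetP QP _ (subsetP sC _ uC)) yP xP (Cy u uC) yx.
move/(_ H); lia.
Qed.

Lemma least_uniq2 (Q : {set T}) z1 z2 : Q \subset P -> leastb le Q z1 -> leastb le Q z2 -> z1 = z2.
Proof.
move=> QP /andP[z1Q /forallP H1] /andP[z2Q /forallP H2].
apply: antis; rewrite ?(subsetP QP) //.
  by move: (H1 z2); rewrite z2Q.
by move: (H2 z1); rewrite z1Q.
Qed.

Lemma rkx_least (Q : {set T}) z : Q \subset P -> leastb le Q z -> rkx le Q z = 0%N.
Proof.
move=> QP /andP[zQ /forallP Hz]; apply/eqP; rewrite -leqn0; apply: rkx_le => C sC _ Cz.
rewrite -(cards1 z); apply: subset_leq_card; apply/subsetP => u uC; rewrite in_set1.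
have uQ := subsetP sC _ uC; apply/eqP; apply: antis; rewrite ?(subsetP QP) ?Cz //.
by move: (Hz u); rewrite uQ.
Qed.

Lemma rkx_pos (Q : {set T}) z x : Q \subset P -> leastb le Q z -> x \in Q -> x != z ->
  (1 <= rkx le Q x)%N.
Proof.
move=> QP /andP[zQ /forallP Hz] xQ nxz.
have zx : le z x by move: (Hz x); rewrite xQ.
have H := @rkx_ge _ le Q [set z; x] x.
have : (#|[set z; x]|.-1 <= rkx le Q x)%N.
  apply: H.
  - by rewrite subUset !sub1set zQ xQ.
  - have zP := subsetP QP _ zQ; have xP := subsetP QP _ xQ.
    apply: chainU1 => //; rewrite ?chain1 ?rfl ?sub1set //.
    by move=> w; rewrite in_set1 => /eqP ->; left.
  - by move=> u; rewrite !inE => /orP[] /eqP ->; rewrite ?rfl ?(subsetP QP).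
by rewrite cards2 eq_sym nxz.
Qed.

Notation rkP x := (rkx le P x).

Lemma rk_z0 : rkP z0 = 0%N.
Proof. by apply: rkx_least => //; apply: z0_least. Qed.

Lemma rk_a : rkP a = 1%N.
Proof. by move: aA; rewrite atomE => /Hranked ->; rewrite rk_z0. Qed.

Lemma Sat u x : u \in P -> x \in P -> le u x ->
  exists C : {set T}, [/\ C \subset [set v in P | le u v], chainb le C,
     (forall w, w \in C -> le w x) & #|C| = (rkP x - rkP u).+1].
Proof.
move=> uP xP ux.
have [n] := ubnP #|[set v in P | le u v && le v x]|; elim: n u uP ux => // n IH u uP ux Hn.
have [E|nux] := eqVneq u x.
  subst u; exists [set x]; split.
  - by rewrite sub1set inE xP rfl.
  - by rewrite chain1 rfl.
  - by move=> w; rewrite in_set1 => /eqP ->; rewrite rfl.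
  - by rewrite cards1 subnn.
have [m cm mx] := cover_ex uP xP ux nux.
move: (cm) => /coversE [_ mP um num _].
have Hm : (#|[set v in P | le m v && le v x]| < n)%N.
  suff : (#|[set v in P | le m v && le v x]| < #|[set v in P | le u v && le v x]|)%N by lia.
  apply: proper_card; apply/properP; split.
    apply/subsetP => v; rewrite !inE => /andP[vP /andP[mv vx]].
    by rewrite vP vx (trn uP mP vP um mv).
  exists u; first by rewrite !inE uP rfl //= ux.
  rewrite !inE uP /=; apply/negP => /andP[mu _]; move/eqP: num; apply.
  exact: antis.
have [C [sC ch Cx cC]] := IH m mP mx Hm.
have rm := Hranked cm.
have mxr := rkx_mono (subxx P) mP xP mx.
have uC : u \notin C.
  apply/negP => /(subsetP sC); rewrite inE => /andP[_ mu]; move/eqP: num; apply.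
  exact: antis.
exists (u |: C); split.
- by rewrite subUset sub1set inE uP rfl //= (subset_trans sC) //; apply/subsetP => v;
    rewrite !inE => /andP[vP mv]; rewrite vP (trn uP mP vP um mv).
- apply: chainU1 => //.
    by apply: subset_trans sC _; apply/subsetP => v; rewrite inE => /andP[].
  move=> w /(subsetP sC); rewrite inE => /andP[wP mw]; left; exact: trn uP mP wP um mw.
- by move=> w; rewrite in_setU1 => /orP[/eqP ->|/Cx].
- rewrite cardsU1 uC cC; lia.
Qed.

Lemma Pdprime_sub : Pdprime le P a \subset P.
Proof. by apply/subsetP => y; rewrite inE => /andP[]. Qed.

Lemma rk_P'' x : x \in P -> le a x -> rkx le (Pdprime le P a) x = (rkP x).-1.
Proof.
move=> xP ax.
have r1 : (1 <= rkP x)%N by rewrite -rk_a; apply: rkx_mono => //; apply: aP.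
apply/eqP; rewrite eqn_leq; apply/andP; split.
  apply: rkx_le => C sC ch Cx.
  have z0C : z0 \notin C.
    apply/negP => /(subsetP sC); rewrite inE => /andP[_ az]; move: (atom_nz aA).
    by rewrite (antis aP z0P az (z0le aP)) eqxx.
  have CP := subset_trans sC Pdprime_sub.
  have := @rkx_ge _ le P (z0 |: C) x.
  rewrite cardsU1 z0C /= => H.
  have : (#|C| <= rkP x)%N.
    apply: H.
    - by rewrite subUset sub1set z0P.
    - by apply: chainU1; rewrite ?z0P // => w /(subsetP CP) wP; left; apply: z0le.
    - by move=> u; rewrite in_setU1 => /orP[/eqP ->|/Cx //]; apply: z0le.
  lia.
have [C [sC ch Cx cC]] := Sat aP xP ax.
have := @rkx_ge _ le (Pdprime le P a) C x sC ch Cx.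
rewrite cC rk_a; lia.
Qed.

Lemma z0P' : z0 \in Pprime le P a.
Proof.
rewrite PprimeE z0P; apply/existsP; exists set0; rewrite sub0set /=.
apply: mubI; first exact: z0P.
  by move=> s; rewrite inE.
by move=> w' w'P _ w'z; apply: antis; rewrite ?z0P // z0le.
Qed.

Lemma mub0 y : is_mub le P set0 y -> y = z0.
Proof.
move=> /mubE [yP _ H]; symmetry; apply: H; rewrite ?z0P ?z0le //.
by move=> s; rewrite inE.
Qed.

Lemma P'cover y : y \in Pprime le P a -> y != z0 ->
  exists2 y', y' \in Pprime le P a & coversb le P y' y.
Proof.
move=> yP' nyz; move: (yP'); rewrite PprimeE => /andP[yP /existsP [S /andP[sS mS]]].
pose X := [set w in Pprime le P a | le w y && (w != y)].
have Xn : X != set0.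
  apply/set0Pn; exists z0; rewrite in_set z0P' z0le // andTb; by rewrite eq_sym.
have [w wX wmax] := exists_maxrk (fun w => rkP w) Xn.
move: wX; rewrite in_set => /andP[wP' /andP[wy nwy]].
have wP := subsetP Pprime_sub _ wP'.
have [_ Sy Hm] := mubE mS.
have [/forallP Hall|/forallPn [s]] := boolP [forall s in S, le s w].
  exfalso; move/eqP: nwy; apply; apply: Hm => // s s_S.
  by move: (Hall s); rewrite s_S.
rewrite negb_imply => /andP[sS1 nsw].
have [v [vP' cwv vy sv]] := Ext yP wP' wy (subsetP sS _ sS1) (Sy _ sS1) nsw.
exists w => //.
have [E|nvy] := eqVneq v y; first by rewrite -E.
have vX : v \in X by rewrite in_set vP' vy nvy.
have := wmax v vX; rewrite (Hranked cwv) => H; exfalso; move: H; apply/negP; rewrite -ltnNge; apply: ltnSn.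
Qed.

Lemma rk_P' y : y \in Pprime le P a -> rkx le (Pprime le P a) y = rkP y.
Proof.
move=> yP'; apply/eqP; rewrite eqn_leq rkx_sub ?Pprime_sub //=.
suff : exists C : {set T}, [/\ C \subset Pprime le P a, chainb le C,
     (forall w, w \in C -> le w y) & #|C| = (rkP y).+1].
  by case=> C [sC ch Cy cC]; have := rkx_ge sC ch Cy; rewrite cC.
have [n] := ubnP (rkP y); elim: n y yP' => // n IH y yP' Hn.
have yP := subsetP Pprime_sub _ yP'.
have [E|nyz] := eqVneq y z0.
  subst y; exists [set z0]; split.
  - by rewrite sub1set z0P'.
  - by rewrite chain1 rfl // z0P.
  - by move=> w; rewrite in_set1 => /eqP ->; rewrite rfl // z0P.
  - by rewrite cards1 rk_z0.
have [y' y'P' cy] := P'cover yP' nyz.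
have ry := Hranked cy.
have [|C [sC ch Cy cC]] := IH y' y'P'; first by lia.
move: (cy) => /coversE [y'P _ y'y ny'y _].
have yC : y \notin C.
  apply/negP => /Cy yy'; move/eqP: ny'y; apply; exact: antis.
exists (y |: C); split.
- by rewrite subUset sub1set yP' sC.
- apply: chainU1 => //; first exact: subset_trans sC Pprime_sub.
  move=> w wC; right; have wP := subsetP (subset_trans sC Pprime_sub) _ wC.
  exact: trn wP y'P yP (Cy w wC) y'y.
- move=> w; rewrite in_setU1 => /orP[/eqP ->|wC]; first by rewrite rfl.
  have wP := subsetP (subset_trans sC Pprime_sub) _ wC.
  exact: trn wP y'P yP (Cy w wC) y'y.
- by rewrite cardsU1 yC cC ry.
Qed.


Lemma rk_ge (Q : {set T}) x : x \in Q -> (rkx le Q x <= rk le Q)%N.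
Proof. by move=> xQ; rewrite /rk; apply: leq_bigmax_cond. Qed.

Lemma rk_le (Q : {set T}) n : (forall x, x \in Q -> rkx le Q x <= n)%N -> (rk le Q <= n)%N.
Proof. by move=> H; rewrite /rk; apply/bigmax_leqP. Qed.

Lemma rkP'_le : (rk le (Pprime le P a) <= rk le P)%N.
Proof.
apply: rk_le => x xP'; rewrite rk_P' //; apply: rk_ge; exact: (subsetP Pprime_sub).
Qed.

Lemma rkP''_le : (rk le (Pdprime le P a) <= (rk le P).-1)%N.
Proof.
apply: rk_le => x; rewrite inE => /andP[xP ax]; rewrite rk_P'' //.
have := rk_ge xP; lia.
Qed.

Lemma join_cover x y c : x \in P -> y \in P -> le y x -> c \in A -> le c x -> ~~ le c y ->
  exists v, [/\ coversb le P y v, le v x, le c v & le y v].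
Proof.
move=> xP yP yx cA cx ncy; have cP := atom_P cA.
have [v Hj] := join_ex xP yx cx yP cP.
move: (Hj) => /and4P[vL yv cv _].
move: (vL); rewrite inL => /andP[vP vx].
exists v; split => //.
case: (Hgeo xP) => _ G; rewrite -(coversL _ xP vx).
have yL : y \in L x by rewrite inL yP yx.
apply/(G y v yL vL); exists c; split => //.
by rewrite atomsL // cA cx.
Qed.

Lemma delta_le : (rk le P <= (rk le (Pprime le P a)).+1)%N.
Proof.
apply: rk_le => x xP.
pose Y := [set w in Pprime le P a | le w x].
have Yn : Y != set0 by apply/set0Pn; exists z0; rewrite in_set z0P' z0le.
have [w wY wmax] := exists_maxrk (fun w => rkP w) Yn.
move: wY; rewrite in_set => /andP[wP' wx].
have wP := subsetP Pprime_sub _ wP'.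
have rw : (rkP w <= rk le (Pprime le P a))%N by rewrite -rk_P' //; apply: rk_ge.
have H1 : forall b, b \in A' -> le b x -> le b w.
  move=> b bA bx; apply/negPn/negP => nbw.
  have [v [vP' cwv vx _]] := Ext xP wP' wx bA bx nbw.
  have vY : v \in Y by rewrite in_set vP' vx.
  have := wmax v vY; rewrite (Hranked cwv) => H; exfalso; move: H; apply/negP.
  by rewrite -ltnNge; apply: ltnSn.
have [/andP[ax naw]|Hc] := boolP (le a x && ~~ le a w).
  have [v [cwv vx av wv]] := join_cover xP wP wx aA ax naw.
  move: (cwv) => /coversE [_ vP _ _ _].
  have E : v = x.
    apply: atomistic => // c cA cx; have [/eqP ->//|nca] := boolP (c == a).
    have cA' : c \in A' by rewrite in_setD1 nca cA.
    exact: trn (atom_P cA) wP vP (H1 c cA' cx) wv.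
  by rewrite -E (Hranked cwv) ltnS.
have E : w = x.
  apply: atomistic => // c cA cx; have [/eqP Eca|nca] := boolP (c == a).
    subst c; move: Hc; rewrite cx /= negbK; done.
  by apply: H1 => //; rewrite in_setD1 nca cA.
by rewrite -E; apply: leq_trans rw _.
Qed.

Local Open Scope ring_scope.

Lemma sum_mub (C : pred T) y (S : {set T}) (c : int) : y \in P -> S \subset P ->
  (forall z, C z -> le z y) -> (forall z, le z y -> is_mub le P S z -> C z) ->
  \sum_(z | C z) (if is_mub le P S z then c else 0) = if S \subset [set s | le s y] then c else 0.
Proof.
move=> yP SP H1 H2; case: ifP => HS.
  have [z zy mz] : exists2 z, le z y & is_mub le P S z.
    by apply: mub_ex => // s /(subsetP HS); rewrite inE.
  rewrite (bigD1 z) /= ?mz; last exact: H2.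
  rewrite big1 ?addr0 // => w /andP[Cw nwz]; case: ifP => // mw.
  by move/eqP: nwz; case; apply: (mub_uniq yP SP (H1 w Cw) zy mw mz).
apply: big1 => w Cw; case: ifP => // mw; exfalso; move/negP: HS; apply.
have [wP Sw _] := mubE mw; apply/subsetP => s sS; rewrite inE.
exact: trn (subsetP SP _ sS) wP yP (Sw s sS) (H1 w Cw).
Qed.

Lemma chi_size (Q : {set T}) z : Q \subset P -> leastb le Q z -> size (chi le Q) = (rk le Q).+1.
Proof.
move=> QP Hz; have zQ : z \in Q by case/andP: Hz.
have HQ := poset_sub HP QP.
rewrite /chi; case: pickP => [z' Hz'|H]; last by move: (H z); rewrite Hz.
have -> : z' = z := least_uniq2 QP Hz' Hz.
rewrite (bigD1 z) //= (mu_rec HQ zQ zQ) eqxx (rkx_least QP Hz) subn0 polyC1 mul1r.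
rewrite size_polyDl size_polyXn //.
apply: leq_ltn_trans (size_sum _ _ _) _; rewrite ltnS; apply/bigmax_leqP => x /andP[xQ nxz].
rewrite mul_polyC; apply: leq_trans (size_scale_leq _ _) _; rewrite size_polyXn.
have := rkx_pos QP Hz xQ nxz; have := rk_ge xQ; lia.
Qed.

Definition sgn (S : {set T}) : int := (-1) ^+ #|S|.
Definition G y := \sum_(S : {set T} | S \subset A') (if is_mub le P S y then sgn S else 0).
Definition H y := \sum_(S : {set T} | S \subset A') (if is_mub le P (a |: S) y then sgn S else 0).

Lemma G0 y : y \notin Pprime le P a -> G y = 0.
Proof.
move=> ny; apply: big1 => S sS; case: ifP => // mS; exfalso.
by move/negP: ny; apply; apply: (mub_P' sS mS).
Qed.

Lemma H0 y : ~~ le a y -> H y = 0.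
Proof.
move=> ny; apply: big1 => S sS; case: ifP => // mS; exfalso.
have [_ Sy _] := mubE mS; move/negP: ny; apply; apply: Sy; exact: setU11.
Qed.

Lemma sumA'_sub (B : {set T}) :
  \sum_(S : {set T} | S \subset A') (if S \subset B then sgn S else 0) = (A' :&: B == set0)%:R.
Proof.
rewrite -big_mkcondr -alt_sum; apply: eq_bigl => S; by rewrite subsetI.
Qed.

Lemma A'B0 y : y \in P -> (A' :&: [set s | le s y] == set0) = (y == z0) || (le a y && (y == a)).
Abort.

Local Notation B y := [set s | le s y].

Lemma A'B_z0 y : y \in P -> ~~ le a y -> (A' :&: B y == set0) = (y == z0).
Proof.
move=> yP nay; have [->|nyz] := eqVneq y z0.
  apply/eqP/setP => s; rewrite in_setI in_setD1 in_set in_set0.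
  apply/negP => /andP[/andP[_ sA] sz]; move: (atom_nz sA).
  by rewrite (antis (atom_P sA) z0P sz (z0le (atom_P sA))) eqxx.
apply/negbTE/set0Pn; have [c cA cy] := atom_below yP nyz.
exists c; rewrite in_setI in_setD1 in_set cA cy !andbT.
by apply/eqP => E; move: nay; rewrite -E cy.
Qed.

Lemma A'B_z0' y : y \in Pprime le P a -> (A' :&: B y == set0) = (y == z0).
Proof.
move=> yP'; have yP := subsetP Pprime_sub _ yP'.
have [->|nyz] := eqVneq y z0.
  apply/eqP/setP => s; rewrite in_setI in_setD1 in_set in_set0.
  apply/negP => /andP[/andP[_ sA] sz]; move: (atom_nz sA).
  by rewrite (antis (atom_P sA) z0P sz (z0le (atom_P sA))) eqxx.
apply/negbTE/set0Pn; move: yP'; rewrite PprimeE => /andP[_ /existsP [S /andP[sS mS]]].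
have [S0|/set0Pn [s s_S]] := eqVneq S set0.
  have mS0 : is_mub le P set0 y by rewrite -S0.
  by move: nyz; rewrite (mub0 mS0) eqxx.
have [_ Sy _] := mubE mS.
by exists s; rewrite in_setI in_set (subsetP sS _ s_S) Sy.
Qed.

Lemma A'B_a y : y \in P -> le a y -> (A' :&: B y == set0) = (y == a).
Proof.
move=> yP ay; have [->|nya] := eqVneq y a.
  apply/eqP/setP => s; rewrite in_setI in_setD1 in_set in_set0.
  apply/negP => /andP[/andP[nsa sA] sa].
  move: (aA); rewrite atomE => /coversE [_ _ _ _ Hc].
  have sP := atom_P sA.
  case: (Hc s sP (z0le sP) sa) => E.
    by move: (atom_nz sA); rewrite E eqxx.
  by move: nsa; rewrite E eqxx.
apply/negbTE/set0Pn; have [c cA cy] := atom_below_a yP ay nya.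
by exists c; rewrite in_setI in_set cA cy.
Qed.

Lemma MG y : y \in Pprime le P a -> G y = mu le (Pprime le P a) z0 y.
Proof.
move=> yP'; apply: (mu_char (poset_sub HP Pprime_sub) z0P') => // [w wP' z0w|]; last first.
  exact: z0le (subsetP Pprime_sub _ yP').
have wP := subsetP Pprime_sub _ wP'.
rewrite /G exchange_big /=.
rewrite (eq_bigr (fun S : {set T} => if S \subset B w then sgn S else 0)) => [|S sS].
  by rewrite sumA'_sub A'B_z0'.
apply: (@sum_mub (fun z => (z \in Pprime le P a) && (le z0 z && le z w))) => //.
- by apply: subset_trans sS _; apply/subsetP => s; apply: A'P.
- by move=> z /andP[_ /andP[]].
- move=> z zw mz; have [zP _ _] := mubE mz.
  by rewrite (mub_P' sS mz) z0le.
Qed.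

Lemma aP'' : a \in Pdprime le P a.
Proof. by rewrite inE aP rfl // aP. Qed.

Lemma MH y : y \in P -> le a y -> H y = mu le (Pdprime le P a) a y.
Proof.
move=> yP ay; apply: (mu_char (poset_sub HP Pdprime_sub) aP'') => //; last by rewrite inE yP.
move=> w; rewrite inE => /andP[wP _] aw.
rewrite /H exchange_big /=.
rewrite (eq_bigr (fun S : {set T} => if S \subset B w then sgn S else 0)) => [|S sS].
  by rewrite sumA'_sub A'B_a.
have -> : (S \subset B w) = (a |: S \subset B w) by rewrite subUset sub1set in_set aw.
apply: (@sum_mub (fun z => (z \in Pdprime le P a) && (le a z && le z w))) => //.
- rewrite subUset sub1set aP /=; by apply: subset_trans sS _; apply/subsetP => s; apply: A'P.
- by move=> z /andP[_ /andP[]].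
- move=> z zw mz; have [zP Sz _] := mubE mz.
  by rewrite inE zP Sz ?setU11.
Qed.

Lemma MP y : y \in P -> G y - H y = mu le P z0 y.
Proof.
move=> yP; apply: (mu_char HP z0P (f := fun y => G y - H y)) => //; last exact: z0le.
move=> w wP z0w; rewrite sumrB /G /H !(exchange_big _ _ _ (fun z => (z \in P) && _)) /=.
have SP : forall S : {set T}, S \subset A' -> S \subset P.
  by move=> S sS; apply: subset_trans sS _; apply/subsetP => s; apply: A'P.
rewrite (eq_bigr (fun S : {set T} => if S \subset B w then sgn S else 0)) => [|S sS]; last first.
  apply: (@sum_mub (fun z => (z \in P) && (le z0 z && le z w))) => //; first exact: SP.
  - by move=> z /andP[_ /andP[]].
  - by move=> z zw mz; have [zP _ _] := mubE mz; rewrite zP z0le.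
rewrite [X in _ - X](eq_bigr (fun S : {set T} => if a |: S \subset B w then sgn S else 0)) => [|S sS]; last first.
  apply: (@sum_mub (fun z => (z \in P) && (le z0 z && le z w))) => //.
  - by rewrite subUset sub1set aP SP.
  - by move=> z /andP[_ /andP[]].
  - by move=> z zw mz; have [zP _ _] := mubE mz; rewrite zP z0le.
have [aw|naw] := boolP (le a w).
  rewrite [X in _ - X](eq_bigr (fun S : {set T} => if S \subset B w then sgn S else 0)) => [|S _]; last first.
    by rewrite subUset sub1set in_set aw.
  rewrite subrr; have -> : (w == z0) = false; last by [].
  apply/negbTE/eqP => E; have := atom_nz aA; rewrite -E (antis aP wP aw) ?eqxx //.
  by rewrite E; exact: z0le aP.
rewrite [X in _ - X]big1 => [|S _]; last first.
  by rewrite subUset sub1set in_set (negbTE naw).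
by rewrite subr0 sumA'_sub A'B_z0.
Qed.

Lemma leastP'' : leastb le (Pdprime le P a) a.
Proof.
rewrite /leastb aP'' /=; apply/forallP => x; apply/implyP; by rewrite inE => /andP[].
Qed.

Lemma chiE (Q : {set T}) z : Q \subset P -> leastb le Q z ->
  chi le Q = \sum_(x in Q) (mu le Q z x)%:P * 'X^(rk le Q - rkx le Q x).
Proof.
move=> QP Hz; rewrite /chi; case: pickP => [z' Hz'|H]; last by move: (H z); rewrite Hz.
by rewrite (least_uniq2 QP Hz' Hz).
Qed.

Lemma chi_eq : chi le P =
  'X^(rk le P - rk le (Pprime le P a)) * chi le (Pprime le P a) -
  'X^((rk le P).-1 - rk le (Pdprime le P a)) * chi le (Pdprime le P a).
Proof.
have lP' : leastb le (Pprime le P a) z0.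
  rewrite /leastb z0P' /=; apply/forallP => x; apply/implyP => xP'.
  exact: z0le (subsetP Pprime_sub _ xP').
rewrite (chiE (subxx P) z0_least) (chiE Pprime_sub lP') (chiE Pdprime_sub leastP'').
rewrite (eq_bigr (fun x => (G x)%:P * 'X^(rk le P - rkP x) - (H x)%:P * 'X^(rk le P - rkP x)));
  last by move=> x xP; rewrite -MP // polyCB mulrBl.
rewrite sumrB; congr (_ - _).
  rewrite (bigID (fun x => x \in Pprime le P a)) /= [X in _ + X]big1 ?addr0; last first.
    by move=> x /andP[_ nx]; rewrite G0 // mul0r.
  rewrite mulr_sumr (eq_bigl (fun x => x \in Pprime le P a)) => [|x]; last first.
    by apply/andP/idP => [[]//|xP']; rewrite (subsetP Pprime_sub _ xP').
  apply: eq_bigr => x xP'; rewrite MG // rk_P' // mulrCA -exprD; congr (_ * 'X^_).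
  have := rk_ge xP'; rewrite rk_P' // => H1; have := rkP'_le; lia.
rewrite (bigID (fun x => le a x)) /= [X in _ + X]big1 ?addr0; last first.
  by move=> x /andP[_ nx]; rewrite H0 // mul0r.
rewrite mulr_sumr (eq_bigl (fun x => x \in Pdprime le P a)) => [|x]; last by rewrite inE.
apply: eq_bigr => x; rewrite inE => /andP[xP ax].
rewrite MH // rk_P'' // mulrCA -exprD; congr (_ * 'X^_).
have xP'' : x \in Pdprime le P a by rewrite inE xP ax.
have := rk_ge xP''; rewrite rk_P'' // => H1.
have : (1 <= rkP x)%N by rewrite -rk_a; apply: rkx_mono => //; apply: aP.
have := rkP''_le; have := rk_ge xP; lia.
Qed.

Lemma main_thm :
  (~ separator le P a ->
     forall (ds : seq nat) (d : nat),
       inductive le (Pdprime le P a) -> exps le (Pdprime le P a) ds ->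
       inductive le (Pprime le P a) -> exps le (Pprime le P a) (d :: ds) ->
       inductive le P /\ exps le P (d.+1 :: ds)) /\
  (separator le P a ->
     forall (ds : seq nat),
       inductive le (Pdprime le P a) -> exps le (Pdprime le P a) ds ->
       inductive le (Pprime le P a) -> exps le (Pprime le P a) ds ->
       inductive le P /\ exps le P (1%N :: ds)).
Proof.
have lP' : leastb le (Pprime le P a) z0.
  rewrite /leastb z0P' /=; apply/forallP => x; apply/implyP => xP'.
  exact: z0le (subsetP Pprime_sub _ xP').
have sz' := chi_size Pprime_sub lP'.
have sz'' := chi_size Pdprime_sub leastP''.
have Hc := chi_eq.
have d1 := delta_le.
have d2 := rkP'_le.
have d3 := rkP''_le.
split.
- move=> nsep ds d ind'' [pos'' e''] ind' [pos' e'].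
  move: sz' sz''; rewrite e' e'' !size_prod_XsubC /= => -[s'] [s''].
  have E1 : (rk le P - rk le (Pprime le P a) = 0)%N.
    move: nsep; rewrite /separator; lia.
  have E2 : ((rk le P).-1 - rk le (Pdprime le P a) = 0)%N by move: E1; lia.
  rewrite E1 E2 !expr0 !mul1r e' e'' in Hc.
  split.
    apply: (inductive_step LG aA ind' ind''); exists ('X - (d%:R)%:P).
    by rewrite e' e'' big_cons.
  split; first by move: pos'; rewrite /= => /andP[_ ->].
  rewrite Hc !big_cons -addn1 natrD polyCD; ring.
- move=> sep ds ind'' [pos'' e''] ind' [pos' e'].
  move: sz' sz''; rewrite e' e'' !size_prod_XsubC /= => -[s'] [s''].
  have E1 : (rk le P - rk le (Pprime le P a) = 1)%N by [].
  have E2 : ((rk le P).-1 - rk le (Pdprime le P a) = 0)%N by move: E1; lia.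
  rewrite E1 E2 expr0 expr1 mul1r e' e'' in Hc.
  split.
    apply: (inductive_step LG aA ind' ind''); exists 1.
    by rewrite e' e'' mul1r.
  split; first by rewrite /= pos'.
  rewrite Hc big_cons polyC1; ring.
Qed.

End Main.

Theorem theorem3p13 (T : finType) (le : rel T) (P : {set T}) (a : T) :
  locally_geometric le P -> atoms le P != set0 -> a \in atoms le P ->
  (~ separator le P a ->
     forall (ds : seq nat) (d : nat),
       inductive le (Pdprime le P a) -> exps le (Pdprime le P a) ds ->
       inductive le (Pprime le P a) -> exps le (Pprime le P a) (d :: ds) ->
       inductive le P /\ exps le P (d.+1 :: ds)) /\
  (separator le P a ->
     forall (ds : seq nat),
       inductive le (Pdprime le P a) -> exps le (Pdprime le P a) ds ->
       inductive le (Pprime le P a) -> exps le (Pprime le P a) ds ->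
       inductive le P /\ exps le P (1%N :: ds)).
Proof.
move=> LG _ aA; exact: main_thm LG aA.
Qed.
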